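(* Let $G$ be a coarsely bottlenecked graph and $H$ a graph such that $H$ is not an asymptotic minor of $G$. For any $M\in\mathbb N$ such that $G$ does not contain an $M$-fat $H$ minor, the skeleton $G_{M,M}$ (for any choice of root $x_0\in V(G)$) contains no $3$-fat $H$ minor.
   Context: All graphs are connected (and unbounded); multi-edges are allowed. $d$ denotes the graph metric on vertices. For $M\ge 0$: sets $X,Y$ of vertices are $M$-disjoint if $d(x,y)>M$ for all $x\in X,y\in Y$; a set $X$ is $M$-connected if any two of its points are joined by a finite sequence of points of $X$ with consecutive points at distance $\le M$; $N_M(S)=\{y: d(s,y)<M\text{ for some } s\in S\}$. An $X,Y$ path is a path from a vertex of $X$ to a vertex of $Y$. $G$ is $M$-fat $n$-bottlenecked if for any two connected $M$-disjoint subgraphs $X,Y\subset G$ there is $S\subset V(G)\setminus(V(X)\cup V(Y))$, $|S|=n$, such that every $X,Y$ path meets $N_M(S)$; $G$ is coarsely bottlenecked if this holds for some $M,n\in\mathbb N$. $H$ is an $M$-fat minor of $G$ if there are connected subgraphs $B_v$ ($v\in V(H)$) and paths $P_e$ ($e\in E(H)$), $P_e$ joining $B_u$ to $B_v$ for $e=uv$, such that any two of these sets are $M$-disjoint unless they correspond to an incident vertex–edge pair of $H$; $H$ is an asymptotic minor of $G$ if $G$ has an $M$-fat $H$ minor for all $M$. Skeleton $G_{\lambda,k}$ (root $x_0$, scale $\lambda\ge1$, connectivity $k\ge1$): layers $A_{N,\lambda}=\{x: N\lambda<d(x,x_0)\le(N+1)\lambda\}$, $N\in\mathbb Z$; blocks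 are the maximal $k$-connected subsets of layers; $G_{\lambda,k}$ has a vertex per block and an edge between two blocks iff an edge of $G$ joins them. *)

(* Defs.v *)
(* Graphs: a vertex type V with a symmetric adjacency relation
   adj.  (Multi-edges of G are irrelevant for everything used here: metric,
   connectivity, paths.)  The minor graph H is a multigraph given by a vertex
   type VH, an edge type EH and an endpoint map endsH : EH -> VH * VH. *)
From Stdlib Require Import List ZArith Relations.
Import ListNotations.
Set Implicit Arguments.

Section Graph.
Variables (V : Type) (adj : V -> V -> Prop).

Inductive walk : nat -> V -> V -> Prop :=
| walk0 x : walk 0 x x
| walkS n x y z : adj x y -> walk n y z -> walk (S n) x z.

Definition graph_connected : Prop := forall x y : V, exists n, walk n x y.

Definition is_dist (x y : V) (n : nat) : Prop :=
  walk n x y /\ forall m, walk m x y -> n <= m.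

Definition dist_le (x y : V) (M : nat) : Prop :=
  exists m, m <= M /\ walk m x y.

Definition dist_lt (x y : V) (M : nat) : Prop :=
  exists m, m < M /\ walk m x y.

Definition M_disjoint (M : nat) (X Y : V -> Prop) : Prop :=
  forall x y, X x -> Y y -> ~ dist_le x y M.

Definition nbhd (M : nat) (S : list V) (y : V) : Prop :=
  exists s, In s S /\ dist_lt s y M.

Definition M_connected (M : nat) (X : V -> Prop) : Prop :=
  forall x y, X x -> X y ->
    clos_refl_trans V (fun a b => X a /\ X b /\ dist_le a b M) x y.

(* vertex set of a connected subgraph: nonempty, and any two of its vertices
   are joined by a walk using only vertices of the set *)
Definition conn_set (X : V -> Prop) : Prop :=
  (exists x, X x) /\
  forall x y, X x -> X y ->
    clos_refl_trans V (fun a b => X a /\ X b /\ adj a b) x y.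

Fixpoint chain (l : list V) : Prop :=
  match l with
  | x :: ((y :: _) as l') => adj x y /\ chain l'
  | _ => True
  end.

Definition is_path (l : list V) (x y : V) : Prop :=
  NoDup l /\ chain l /\ hd_error l = Some x /\ last l x = y.

Definition XY_path (X Y : V -> Prop) (l : list V) : Prop :=
  exists x y, X x /\ Y y /\ is_path l x y.

Definition fat_bottlenecked (M n : nat) : Prop :=
  forall X Y : V -> Prop, conn_set X -> conn_set Y -> M_disjoint M X Y ->
  exists S : list V,
    NoDup S /\ length S = n /\
    (forall s, In s S -> ~ X s /\ ~ Y s) /\
    forall l, XY_path X Y l -> exists z, In z l /\ nbhd M S z.

Definition coarsely_bottlenecked : Prop :=
  exists M n : nat, fat_bottlenecked M n.

Definition fat_minor (VH EH : Type) (endsH : EH -> VH * VH) (M : nat) : Prop :=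
  exists (B : VH -> V -> Prop) (P : EH -> list V),
    (forall v, conn_set (B v)) /\
    (forall e, exists x y, B (fst (endsH e)) x /\ B (snd (endsH e)) y /\
                           is_path (P e) x y) /\
    (forall u v, u <> v -> M_disjoint M (B u) (B v)) /\
    (forall e f, e <> f -> M_disjoint M (fun z => In z (P e)) (fun z => In z (P f))) /\
    (forall v e, v <> fst (endsH e) -> v <> snd (endsH e) ->
                 M_disjoint M (B v) (fun z => In z (P e))).

Definition asymptotic_minor (VH EH : Type) (endsH : EH -> VH * VH) : Prop :=
  forall M : nat, fat_minor endsH M.

Definition in_layer (x0 : V) (lam : nat) (N : Z) (x : V) : Prop :=
  exists n, is_dist x x0 n /\
    (N * Z.of_nat lam < Z.of_nat n <= (N + 1) * Z.of_nat lam)%Z.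

Definition is_block (x0 : V) (lam k : nat) (B : V -> Prop) : Prop :=
  exists N : Z,
    (exists x, B x) /\
    (forall x, B x -> in_layer x0 lam N x) /\
    M_connected k B /\
    forall B' : V -> Prop,
      (forall x, B' x -> in_layer x0 lam N x) -> M_connected k B' ->
      (forall x, B x -> B' x) -> forall x, B' x -> B x.

Definition skel_vertex (x0 : V) (lam k : nat) : Type :=
  { B : V -> Prop | is_block x0 lam k B }.

Definition skel_adj (x0 : V) (lam k : nat) (B1 B2 : skel_vertex x0 lam k) : Prop :=
  B1 <> B2 /\
  exists x y, proj1_sig B1 x /\ proj1_sig B2 y /\ adj x y.

End Graph.

(* Main.v *)
Require Import Defs.
From Stdlib Require Import List ZArith Relations Lia.
From Stdlib Require Import Classical ClassicalEpsilon FunctionalExtensionality PropExtensionality ProofIrrelevance.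
Import ListNotations.

Section Gen.
Variables (V : Type) (adj : V -> V -> Prop).

Lemma walk_app : forall m x y n z, walk adj m x y -> walk adj n y z -> walk adj (m+n) x z.
Proof. intros m x y n z H; revert n z; induction H; intros; simpl; auto. econstructor; eauto. Qed.

Lemma walk_snoc : forall n x y z, walk adj n x y -> adj y z -> walk adj (S n) x z.
Proof. intros. replace (S n) with (n+1) by lia. eapply walk_app; eauto. econstructor; eauto. constructor. Qed.

Lemma walk_rev : (forall x y, adj x y -> adj y x) -> forall n x y, walk adj n x y -> walk adj n y x.
Proof. intros Hs n x y H; induction H. constructor. eapply walk_snoc; eauto. Qed.

Lemma dist_le_w : forall x y a b, a <= b -> dist_le adj x y a -> dist_le adj x y b.
Proof. intros x y a b H [m [Hm Hw]]. exists m; split; auto; lia. Qed.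

Lemma dist_le_app : forall x y z a b, dist_le adj x y a -> dist_le adj y z b -> dist_le adj x z (a+b).
Proof. intros x y z a b [m [Hm Hw]] [m' [Hm' Hw']]. exists (m+m'); split. lia. eapply walk_app; eauto. Qed.

Lemma dist_le_sym : (forall x y, adj x y -> adj y x) -> forall x y a, dist_le adj x y a -> dist_le adj y x a.
Proof. intros Hs x y a [m [Hm Hw]]. exists m; split; auto. apply walk_rev; auto. Qed.

Lemma crt_mono : forall (R R' : V -> V -> Prop), (forall a b, R a b -> R' a b) ->
  forall x y, clos_refl_trans V R x y -> clos_refl_trans V R' x y.
Proof. intros R R' H x y Hc; induction Hc. apply rt_step; auto. apply rt_refl. eapply rt_trans; eauto. Qed.

Lemma crt_sym : forall (R : V -> V -> Prop), (forall a b, R a b -> R b a) ->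
  forall x y, clos_refl_trans V R x y -> clos_refl_trans V R y x.
Proof. intros R H x y Hc; induction Hc. apply rt_step; auto. apply rt_refl. eapply rt_trans; eauto. Qed.

Lemma crt_prefix : forall (R : V -> V -> Prop) y x, clos_refl_trans V R y x ->
  clos_refl_trans V (fun a b => clos_refl_trans V R y a /\ clos_refl_trans V R y b /\ R a b) y x.
Proof.
  intros R y x H. apply clos_rt_rtn1 in H. induction H. apply rt_refl.
  eapply rt_trans; [exact IHclos_refl_trans_n1|]. apply rt_step.
  assert (clos_refl_trans V R y y0) by (apply clos_rtn1_rt; auto).
  split; [auto|split; [eapply rt_trans; [eauto| apply rt_step; auto]|auto]].
Qed.

Lemma chain_cons_inv : forall a l, chain adj (a :: l) -> chain adj l.
Proof. intros a l H. destruct l; simpl in *; tauto. Qed.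

Lemma chain_suffix : forall l1 l2, chain adj (l1 ++ l2) -> chain adj l2.
Proof. induction l1; simpl; intros; auto. apply IHl1. eapply chain_cons_inv; eauto. Qed.

Lemma last_cons_ne : forall (a : V) l d, l <> [] -> last (a :: l) d = last l d.
Proof. intros a l d H. destruct l; [contradiction|reflexivity]. Qed.

Lemma last_default : forall (l : list V) d d', l <> [] -> last l d = last l d'.
Proof.
  induction l; intros d d' H; [contradiction|].
  destruct l. reflexivity. rewrite !last_cons_ne by discriminate. apply IHl. discriminate.
Qed.

Lemma last_app : forall l1 (x : V) l2 d, last (l1 ++ x :: l2) d = last (x :: l2) d.
Proof.
  induction l1; intros. reflexivity.
  rewrite <- app_comm_cons, last_cons_ne. apply IHl1. destruct l1; discriminate.
Qed.

Lemma extract_path : forall (X : V -> Prop) x y,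
  clos_refl_trans V (fun a b => X a /\ X b /\ adj a b) x y -> X x ->
  exists l, is_path adj l x y /\ forall z, In z l -> X z.
Proof.
  intros X x y H. apply clos_rt_rt1n in H. induction H; intros Hx.
  - exists [x]. split. split. constructor; [simpl; tauto| constructor]. simpl; auto.
    intros z [->|[]]; auto.
  - destruct H as [_ [Hy Hxy]]. destruct (IHclos_refl_trans_1n Hy) as [l [[Hnd [Hch [Hhd Hl]]] Hin]].
    assert (Hne : l <> []) by (intro; subst; discriminate).
    destruct (classic (In x l)) as [Hx'|Hx'].
    + destruct (in_split _ _ Hx') as [l1 [l2 ->]].
      exists (x :: l2). split. split; [|split; [|split]].
      * eapply NoDup_app_remove_l; eauto.
      * eapply chain_suffix; eauto.
      * reflexivity.
      * rewrite <- Hl, last_app. apply last_default. discriminate.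
      * intros w Hw. apply Hin. apply in_or_app. right; auto.
    + exists (x :: l). split. split; [|split; [|split]].
      * constructor; auto.
      * destruct l as [|b l]; [contradiction|]. simpl in Hhd. injection Hhd as ->. simpl. split; auto.
      * reflexivity.
      * rewrite last_cons_ne by auto. rewrite <- Hl. apply last_default; auto.
      * intros w [<-|Hw]; auto.
Qed.

Lemma path_crt : forall l a, chain adj l -> hd_error l = Some a ->
  clos_refl_trans V (fun u v => In u l /\ In v l /\ adj u v) a (last l a).
Proof.
  induction l as [|c l IH]; intros a Hc Hh. discriminate. simpl in Hh. injection Hh as ->.
  destruct l as [|b l]. simpl. apply rt_refl.
  destruct Hc as [Hab Hc]. rewrite last_cons_ne by discriminate.
  rewrite (last_default (b::l) a b) by discriminate.
  eapply rt_trans. apply rt_step. split; [left; auto|split; [right; left; auto|exact Hab]].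
  eapply crt_mono; [|apply IH; auto]. intros u v [H1 [H2 H3]]. split; [right; auto|split; [right; auto|auto]].
Qed.

Lemma nat_min (P : nat -> Prop) : (exists n, P n) -> exists n, P n /\ forall m, P m -> n <= m.
Proof.
  intros [n Hn]. revert Hn. induction n as [n IH] using lt_wf_ind. intros Hn.
  destruct (classic (exists m, m < n /\ P m)) as [[m [Hm1 Hm2]]|H].
  - exact (IH m Hm1 Hm2).
  - exists n. split; auto. intros m Hm. destruct (le_lt_dec n m); auto. exfalso; apply H; eauto.
Qed.

End Gen.

Section Main.
Variables (V : Type) (adj : V -> V -> Prop).
Hypothesis Hsym : forall x y, adj x y -> adj y x.
Hypothesis Hconn : graph_connected adj.
Variable x0 : V.
Variable M : nat.
Hypothesis HM : 1 <= M.

Lemma dist_ex : forall x, exists n, is_dist adj x x0 n.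
Proof. intros x. destruct (nat_min (fun n => walk adj n x x0) (Hconn x x0)) as [n [H1 H2]]. exists n; split; auto. Qed.

Definition dd (x : V) : nat := proj1_sig (constructive_indefinite_description _ (dist_ex x)).

Lemma dd_spec : forall x, is_dist adj x x0 (dd x).
Proof. intros x. unfold dd. destruct (constructive_indefinite_description _ _); auto. Qed.

Lemma dd_unique : forall x n, is_dist adj x x0 n -> n = dd x.
Proof. intros x n [H1 H2]. destruct (dd_spec x) as [H3 H4]. specialize (H2 _ H3). specialize (H4 _ H1). lia. Qed.

Lemma dd_walk : forall m x y, walk adj m x y -> dd x <= m + dd y.
Proof. intros m x y H. destruct (dd_spec x) as [_ H1]. apply H1. eapply walk_app; eauto. apply dd_spec. Qed.

Definition lay (x : V) : Z := ((Z.of_nat (dd x) - 1) / Z.of_nat M)%Z.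

Lemma lay_spec : forall x, (Z.of_nat M * lay x < Z.of_nat (dd x) <= Z.of_nat M * (lay x + 1))%Z.
Proof.
  intros x. unfold lay. assert (HM' : (0 < Z.of_nat M)%Z) by lia.
  pose proof (Z.div_mod (Z.of_nat (dd x) - 1) (Z.of_nat M) ltac:(lia)).
  pose proof (Z.mod_pos_bound (Z.of_nat (dd x) - 1) (Z.of_nat M) HM'). nia.
Qed.

Lemma lay_unique : forall x N, (Z.of_nat M * N < Z.of_nat (dd x) <= Z.of_nat M * (N + 1))%Z -> N = lay x.
Proof. intros x N H. pose proof (lay_spec x). assert (HM' : (0 < Z.of_nat M)%Z) by lia. nia. Qed.

Lemma in_layer_iff : forall N x, in_layer adj x0 M N x <-> lay x = N.
Proof.
  intros N x. split.
  - intros [n [Hd Hb]]. apply dd_unique in Hd. subst. symmetry. apply lay_unique. nia.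
  - intros <-. exists (dd x). split. apply dd_spec. pose proof (lay_spec x). nia.
Qed.

Lemma lay_close : forall x y, dd y <= dd x + M -> (lay y <= lay x + 1)%Z.
Proof. intros x y H. pose proof (lay_spec x). pose proof (lay_spec y). assert (HM' : (0 < Z.of_nat M)%Z) by lia. nia. Qed.

Lemma lay_walk : forall m x y, m <= M -> walk adj m x y -> (lay y <= lay x + 1)%Z /\ (lay x <= lay y + 1)%Z.
Proof.
  intros m x y Hm Hw. pose proof (dd_walk _ _ _ Hw). pose proof (dd_walk _ _ _ (walk_rev _ _ Hsym _ _ _ Hw)).
  split; apply lay_close; lia.
Qed.

Lemma lay_adj : forall x y, adj x y -> (lay y <= lay x + 1)%Z /\ (lay x <= lay y + 1)%Z.
Proof. intros x y H. apply (lay_walk 1); auto. econstructor; eauto. constructor. Qed.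

Lemma block_lay : forall B, is_block adj x0 M M B -> forall x y, B x -> B y -> lay x = lay y.
Proof.
  intros B [N [_ [Hl _]]] x y Hx Hy. apply Hl, in_layer_iff in Hx. apply Hl, in_layer_iff in Hy. congruence.
Qed.

Lemma block_absorb : forall B, is_block adj x0 M M B -> forall y a, B y -> lay a = lay y ->
  dist_le adj y a M -> B a.
Proof.
  intros B Hb y a Hy Ha Hd. pose proof (block_lay B Hb) as BL.
  destruct Hb as [N [Hne [Hl [Hmc Hmax]]]].
  assert (HyN : lay y = N) by (apply in_layer_iff; auto).
  apply (Hmax (fun x => B x \/ x = a)); [| |intros; left; auto|right; reflexivity].
  - intros x [Hx| ->]; auto. apply in_layer_iff. congruence.
  - intros x x' [Hx| ->] [Hx'| ->].
    + eapply crt_mono; [|apply Hmc; eauto]. intros u v [? [? ?]]; auto.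
    + apply rt_trans with y. eapply crt_mono; [|apply (Hmc x y); eauto]. intros u v [? [? ?]]; auto.
      apply rt_step; auto.
    + apply rt_trans with y. apply rt_step. split; [right; auto|split; [left; eauto|]]. apply dist_le_sym; auto.
      eapply crt_mono; [|apply (Hmc y x'); eauto]. intros u v [? [? ?]]; auto.
    + apply rt_refl.
Qed.

Lemma block_merge : forall B1 B2, is_block adj x0 M M B1 -> is_block adj x0 M M B2 ->
  forall y z, B1 y -> B2 z -> lay y = lay z -> dist_le adj y z M -> forall x, B1 x -> B2 x.
Proof.
  intros B1 B2 Hb1 Hb2 y z Hy Hz Hyz Hd. pose proof (block_lay B1 Hb1) as BL1.
  destruct Hb1 as [N1 [_ [Hl1 [Hmc1 _]]]].
  destruct Hb2 as [N [Hne [Hl [Hmc Hmax]]]].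
  assert (HzN : lay z = N) by (apply in_layer_iff; auto).
  intros x Hx.
  apply (Hmax (fun x => B1 x \/ B2 x)); [| |intros; right; auto|left; auto].
  - intros w [Hw|Hw]; auto. apply in_layer_iff. rewrite (BL1 w y); congruence.
  - assert (L1 : forall u v, B1 u -> B1 v -> clos_refl_trans V (fun a b => (B1 a \/ B2 a) /\ (B1 b \/ B2 b) /\ dist_le adj a b M) u v).
    { intros u v Hu Hv. eapply crt_mono; [|apply Hmc1; eauto]. intros p q [? [? ?]]; auto. }
    assert (L2 : forall u v, B2 u -> B2 v -> clos_refl_trans V (fun a b => (B1 a \/ B2 a) /\ (B1 b \/ B2 b) /\ dist_le adj a b M) u v).
    { intros u v Hu Hv. eapply crt_mono; [|apply Hmc; eauto]. intros p q [? [? ?]]; auto. }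
    assert (Lyz : clos_refl_trans V (fun a b => (B1 a \/ B2 a) /\ (B1 b \/ B2 b) /\ dist_le adj a b M) y z) by (apply rt_step; auto).
    assert (Lzy : clos_refl_trans V (fun a b => (B1 a \/ B2 a) /\ (B1 b \/ B2 b) /\ dist_le adj a b M) z y)
      by (apply rt_step; split; [auto|split; [auto|apply dist_le_sym; auto]]).
    intros u v [Hu|Hu] [Hv|Hv].
    + apply L1; auto.
    + eapply rt_trans; [apply (L1 u y)|eapply rt_trans; [exact Lyz|apply L2]]; auto.
    + eapply rt_trans; [apply (L2 u z)|eapply rt_trans; [exact Lzy|apply L1]]; auto.
    + apply L2; auto.
Qed.

Definition SV := skel_vertex adj x0 M M.
Definition SA := @skel_adj V adj x0 M M.

Lemma blocks_eq : forall C1 C2 : SV, (forall x, proj1_sig C1 x <-> proj1_sig C2 x) -> C1 = C2.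
Proof.
  intros [B1 H1] [B2 H2] H. simpl in H.
  assert (B1 = B2). { apply functional_extensionality; intros x; apply propositional_extensionality; auto. }
  subst. f_equal. apply proof_irrelevance.
Qed.

Lemma cross : forall m y z, walk adj m y z -> forall L, (lay y <= L)%Z -> (L + 1 <= lay z)%Z ->
  exists a b, adj a b /\ lay a = L /\ lay b = (L+1)%Z /\ dist_le adj y a m /\ dist_le adj b z m.
Proof.
  intros m y z H. induction H; intros L H1 H2. lia.
  destruct (Z_le_gt_dec (lay y) L).
  - destruct (IHwalk L) as [a [b [Hab [Ha [Hb [Hya Hbz]]]]]]; auto.
    exists a, b. split; auto. split; auto. split; auto. split.
    + destruct Hya as [k [Hk Hw]]. exists (S k). split. lia. econstructor; eauto.
    + eapply dist_le_w; [|eauto]. lia.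
  - pose proof (lay_adj _ _ H). exists x, y. split; auto. split. lia. split. lia. split.
    exists 0; split; [lia|constructor]. exists n; split; auto.
Qed.

Definition near (C D : SV) := C = D \/ SA C D.

Lemma L1up : forall (C D : SV) y z, proj1_sig C y -> proj1_sig D z -> dist_le adj y z M ->
  lay z = (lay y + 1)%Z -> SA C D.
Proof.
  intros C D y z Hy Hz [m [Hm Hw]] Hl.
  destruct (cross _ _ _ Hw (lay y)) as [a [b [Hab [Ha [Hb [Hya Hbz]]]]]]; try lia.
  split.
  - intros E. subst D. pose proof (block_lay _ (proj2_sig C) _ _ Hy Hz). lia.
  - exists a, b. split; [|split; auto].
    + apply (block_absorb _ (proj2_sig C) y); auto. eapply dist_le_w; [|eauto]. auto.
    + apply (block_absorb _ (proj2_sig D) z); auto. congruence. apply dist_le_sym; auto. eapply dist_le_w; [|eauto]. auto.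
Qed.

Lemma SA_sym : forall C D, SA C D -> SA D C.
Proof. intros C D [Hne [a [b [Ha [Hb Hab]]]]]. split; auto. exists b, a; auto. Qed.

Lemma L1 : forall (C D : SV) y z, proj1_sig C y -> proj1_sig D z -> dist_le adj y z M -> near C D.
Proof.
  intros C D y z Hy Hz Hd. destruct Hd as [m [Hm Hw]] eqn:E. pose proof (lay_walk _ _ _ Hm Hw) as [H1 H2].
  clear E.
  destruct (Z.eq_dec (lay z) (lay y)) as [Heq|Hne].
  - left. apply blocks_eq. intros x. split.
    + apply (block_merge _ _ (proj2_sig C) (proj2_sig D) y z); auto.
    + apply (block_merge _ _ (proj2_sig D) (proj2_sig C) z y); auto. apply dist_le_sym; auto.
  - right. destruct (Z.eq_dec (lay z) (lay y + 1)).
    + eapply L1up; eauto.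
    + apply SA_sym. eapply (L1up D C z y); eauto. apply dist_le_sym; auto. lia.
Qed.


Lemma block_of : forall y, exists C : SV, proj1_sig C y.
Proof.
  intros y.
  set (R := fun a b => lay a = lay y /\ lay b = lay y /\ dist_le adj a b M).
  set (B := fun x => lay x = lay y /\ clos_refl_trans V R y x).
  assert (Hb : is_block adj x0 M M B).
  { exists (lay y). split; [exists y; split; [reflexivity|apply rt_refl]|split; [|split]].
    - intros x [Hx _]. apply in_layer_iff; auto.
    - assert (K : forall x, B x -> clos_refl_trans V (fun a b => B a /\ B b /\ dist_le adj a b M) y x).
      { intros x [_ Hx]. eapply crt_mono; [|apply crt_prefix; exact Hx].
        intros a b [Ha [Hb [Hl1 [Hl2 Hd]]]]. split; [split; auto|split; [split; auto|auto]]. }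
      intros x x' Hx Hx'. eapply rt_trans; [|apply K; auto].
      apply crt_sym; [|apply K; auto]. intros a b [? [? ?]]. split; auto. split; auto. apply dist_le_sym; auto.
    - intros B' HB' Hmc Hsub x Hx. split.
      + apply in_layer_iff; auto.
      + eapply crt_mono; [|apply Hmc; [apply Hsub; split; [reflexivity|apply rt_refl]|exact Hx]].
        intros a b [Ha [Hb Hd]]. split; [apply in_layer_iff; auto|split; [apply in_layer_iff; auto|auto]]. }
  exists (exist _ B Hb). simpl. split; [reflexivity|apply rt_refl].
Qed.

Definition Lift (S : SV -> Prop) (y : V) : Prop :=
  exists C : SV, S C /\ exists p, proj1_sig C p /\ dist_le adj p y M.

Lemma near_dist : forall C D, near C D -> dist_le SA C D 1.
Proof.
  intros C D [->|H]. exists 0; split; [lia|constructor].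
  exists 1; split; [lia|]. econstructor; eauto. constructor.
Qed.

Lemma Lift_disj : forall S1 S2, M_disjoint SA 3 S1 S2 -> M_disjoint adj M (Lift S1) (Lift S2).
Proof.
  intros S1 S2 H y z [A [HA [p [Hp Hpy]]]] [D [HD [q [Hq Hqz]]]] Hyz.
  destruct (block_of y) as [Cy HCy]. destruct (block_of z) as [Cz HCz].
  apply (H A D HA HD).
  pose proof (near_dist _ _ (L1 A Cy p y Hp HCy Hpy)) as N1.
  pose proof (near_dist _ _ (L1 Cy Cz y z HCy HCz Hyz)) as N2.
  pose proof (near_dist _ _ (L1 Cz D z q HCz Hq (dist_le_sym _ _ Hsym _ _ _ Hqz))) as N3.
  apply (dist_le_app _ _ _ Cz _ 2 1); auto. apply (dist_le_app _ _ _ Cy _ 1 1); auto.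
Qed.

Lemma disj_mono : forall (X Y X' Y' : V -> Prop), (forall x, X' x -> X x) -> (forall y, Y' y -> Y y) ->
  M_disjoint adj M X Y -> M_disjoint adj M X' Y'.
Proof. intros X Y X' Y' H1 H2 H x y Hx Hy. apply H; auto. Qed.

Definition RL S := fun a b => Lift S a /\ Lift S b /\ adj a b.

Lemma lift_walk : forall S (C : SV) p, S C -> proj1_sig C p ->
  forall k w y, walk adj k w y -> forall j, walk adj j p w -> j + k <= M -> clos_refl_trans V (RL S) w y.
Proof.
  intros S C p HC Hp k w y Hw. induction Hw; intros j Hj Hjk. apply rt_refl.
  eapply rt_trans; [apply rt_step|apply (IHHw (Datatypes.S j))]; [|eapply walk_snoc; eauto|lia].
  split; [|split; auto].
  - exists C; split; auto; exists p; split; auto; exists j; split; [lia|auto].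
  - exists C; split; auto; exists p; split; auto; exists (Datatypes.S j); split; [lia|eapply walk_snoc; eauto].
Qed.

Lemma lift_block : forall S (C : SV) p q, S C -> proj1_sig C p -> proj1_sig C q ->
  clos_refl_trans V (RL S) p q.
Proof.
  intros S C p q HC Hp Hq. destruct (proj2_sig C) as [N [_ [_ [Hmc _]]]].
  specialize (Hmc p q Hp Hq). clear Hp Hq. induction Hmc.
  - destruct H as [Hx [Hy [m [Hm Hw]]]]. apply (lift_walk S C x HC Hx m x y Hw 0); [constructor|lia].
  - apply rt_refl.
  - eapply rt_trans; eauto.
Qed.

Lemma lift_skel : forall S (C D : SV), clos_refl_trans SV (fun A B => S A /\ S B /\ SA A B) C D -> S C ->
  forall p q, proj1_sig C p -> proj1_sig D q -> clos_refl_trans V (RL S) p q.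
Proof.
  intros S C D H. apply clos_rt_rt1n in H. induction H; intros HC p q Hp Hq.
  - eapply lift_block; eauto.
  - destruct H as [_ [Hy [_ [a [b [Ha [Hb Hab]]]]]]].
    apply rt_trans with a. eapply lift_block; eauto.
    apply rt_trans with b. apply rt_step. split; [|split; auto].
    exists x; split; auto; exists a; split; auto; exists 0; split; [lia|constructor].
    exists y; split; auto; exists b; split; auto; exists 0; split; [lia|constructor].
    apply IHclos_refl_trans_1n; auto.
Qed.

Lemma RL_sym : forall S a b, RL S a b -> RL S b a.
Proof. intros S a b [? [? ?]]; split; auto. Qed.

Lemma conn_lift : forall S, conn_set SA S -> conn_set adj (Lift S).
Proof.
  intros S [[C HC] Hc]. split.
  - destruct (proj2_sig C) as [N [[p Hp] _]]. exists p, C; split; auto; exists p; split; auto.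
    exists 0; split; [lia|constructor].
  - intros y y' [A [HA [p [Hp [m [Hm Hw]]]]]] [A' [HA' [p' [Hp' [m' [Hm' Hw']]]]]].
    apply rt_trans with p. apply crt_sym. apply RL_sym.
    apply (lift_walk S A p HA Hp m p y Hw 0); [constructor|lia].
    apply rt_trans with p'. apply (lift_skel S A A'); auto.
    apply (lift_walk S A' p' HA' Hp' m' p' y' Hw' 0); [constructor|lia].
Qed.

End Main.

Lemma block_pos : forall V adj (x0 : V) lam k B, is_block adj x0 lam k B -> 1 <= lam.
Proof.
  intros V adj x0 lam k B [N [[x Hx] [Hl _]]]. destruct (Hl x Hx) as [n [_ Hn]].
  destruct lam; [|lia]. simpl in Hn. lia.
Qed.

Theorem theorem4 (V : Type) (adj : V -> V -> Prop)
  (VH EH : Type) (endsH : EH -> VH * VH) (M : nat) (x0 : V) :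
  (forall x y, adj x y -> adj y x) ->
  graph_connected adj ->
  coarsely_bottlenecked adj ->
  ~ asymptotic_minor adj endsH ->
  ~ fat_minor adj endsH M ->
  ~ fat_minor (@skel_adj V adj x0 M M) endsH 3.
Proof.
  intros Hsym Hconn _ _ HnoM [Bs [Ps [HB [HP [HBB [HPP HBP]]]]]].
  destruct (classic (exists v : VH, True)) as [[v0 _]|Hne].
  2:{ apply HnoM. exists (fun _ _ => False), (fun _ => []).
      split; [intros v; exfalso; apply Hne; eauto|].
      split; [intros e; exfalso; apply Hne; exists (fst (endsH e)); auto|].
      split; [intros u; exfalso; apply Hne; eauto|].
      split; [intros e; exfalso; apply Hne; exists (fst (endsH e)); auto|].
      intros u; exfalso; apply Hne; eauto. }
  assert (HM : 1 <= M).
  { destruct (HB v0) as [[C _] _]. exact (block_pos _ _ _ _ _ _ (proj2_sig C)). }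
  assert (HQ : forall e, exists l,
    (exists p q, Lift V adj x0 M (Bs (fst (endsH e))) p /\ Lift V adj x0 M (Bs (snd (endsH e))) q /\ is_path adj l p q)
    /\ forall z, In z l -> Lift V adj x0 M (fun C => In C (Ps e)) z).
  { intros e. destruct (HP e) as [C [D [HC [HD [Hnd [Hch [Hhd Hl]]]]]]].
    destruct (proj2_sig C) as [N [[p Hp] _]]. destruct (proj2_sig D) as [N' [[q Hq] _]].
    assert (HinC : In C (Ps e)).
    { destruct (Ps e); simpl in Hhd; [discriminate|]. injection Hhd as ->. left; auto. }
    pose proof (path_crt _ _ (Ps e) C Hch Hhd) as Hc. rewrite Hl in Hc.
    assert (Hc' : clos_refl_trans V (RL V adj x0 M (fun C => In C (Ps e))) p q).
    { eapply (lift_skel V adj x0 M HM (fun C => In C (Ps e)) C D); eauto. }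
    destruct (extract_path V adj _ p q Hc') as [l [Hpath Hin]].
    { exists C; split; auto; exists p; split; auto; exists 0; split; [lia|constructor]. }
    exists l. split; auto. exists p, q. split; [|split; auto].
    exists C; split; auto; exists p; split; auto; exists 0; split; [lia|constructor].
    exists D; split; auto; exists q; split; auto; exists 0; split; [lia|constructor]. }
  apply HnoM.
  exists (fun v => Lift V adj x0 M (Bs v)),
         (fun e => proj1_sig (constructive_indefinite_description _ (HQ e))).
  split; [|split; [|split; [|split]]].
  - intros v. apply (conn_lift V adj Hsym x0 M HM). apply HB.
  - intros e. exact (proj1 (proj2_sig (constructive_indefinite_description _ (HQ e)))).
  - intros u v Huv. apply (Lift_disj V adj Hsym Hconn x0 M HM). apply HBB; auto.
  - intros e f Hef.
    pose proof (proj2 (proj2_sig (constructive_indefinite_description _ (HQ e)))) as H1.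
    pose proof (proj2 (proj2_sig (constructive_indefinite_description _ (HQ f)))) as H2.
    eapply disj_mono; [exact H1|exact H2|]. apply (Lift_disj V adj Hsym Hconn x0 M HM). apply HPP; auto.
  - intros v e H1 H2.
    pose proof (proj2 (proj2_sig (constructive_indefinite_description _ (HQ e)))) as H3.
    eapply disj_mono; [intros x Hx; exact Hx|exact H3|]. apply (Lift_disj V adj Hsym Hconn x0 M HM). apply HBP; auto.
Qed.
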